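(* In the affine Schur category $\mathcal{AS}$ over a commutative ring $\Bbbk$, for all integers $a\ge1$, $0\le r\le a$ and all $u\in\Bbbk$: $$U_{a,u}\circ(\omega_{a,r}\otimes 1_u)=(1_u\otimes\omega_{a,r})\circ U_{a,u},\qquad D_{u,a}\circ(1_u\otimes\omega_{a,r})=(\omega_{a,r}\otimes1_u)\circ D_{u,a}.$$
   Context: Let $\Bbbk$ be a commutative ring with $1$. The affine Schur category $\mathcal{AS}$ is the strict $\Bbbk$-linear monoidal category defined as follows. Generating objects: the integers $a\ge1$ (black strands of thickness $a$) and the elements $u\in\Bbbk$ (red strands labelled $u$); objects are finite words in these, tensor product being concatenation, written $(x_1,\dots,x_k)$ or $x_1\otimes\cdots\otimes x_k$. Generating morphisms, for $a,b\ge1$, $u\in\Bbbk$: merge $M_{a,b}:(a,b)\to(a+b)$, split $S_{a,b}:(a+b)\to(a,b)$, crossing $X_{a,b}:(a,b)\to(b,a)$, dot $\omega_a:(a)\to(a)$, traverse-up $U_{a,u}:(a,u)\to(u,a)$, traverse-down $D_{u,a}:(u,a)\to(a,u)$. Conventions: a black strand of thickness $0$ is the unit object and any merge, split or crossing involving a thickness-$0$ strand is an identity; $1_x$ is an identity. Derived morphisms: $\omega_{a,0}:=1_a$; $\omega_{a,r}:=M_{r,a-r}\circ(\omega_r\otimes1_{a-r})\circ S_{r,a-r}$ for $1\le r\le a$ (so $\omega_{a,a}=\omega_a$); $\omega_{a,r}:=0$ if $r<0$ or $r>a$; $S^{(a)}:(a)\to(1,\dots,1)$ and $M^{(a)}:(1,\dots,1)\to(a)$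 are iterated splits/merges; $g_r(u):=\sum_{i=0}^{r}(-1)^i\big(\prod_{j=0}^{i-1}(u+j)\big)\omega_{r,r-i}\in\mathrm{End}(r)$. Defining relations, for all $a,b,c,d,r\ge1$, $u\in\Bbbk$: (R1) $M_{a+b,c}(M_{a,b}\otimes1_c)=M_{a,b+c}(1_a\otimes M_{b,c})$, $(S_{a,b}\otimes1_c)S_{a+b,c}=(1_a\otimes S_{b,c})S_{a,b+c}$; (R2) if $a+c=b+d$: $S_{b,d}M_{a,c}=\sum(M_{s,c-t}\otimes M_{a-s,t})(1_s\otimes X_{a-s,c-t}\otimes1_t)(S_{s,a-s}\otimes S_{c-t,t})$ over $0\le s\le\min(a,b)$, $0\le t\le\min(c,d)$, $t-s=d-a$; (R3) $M_{a,b}S_{a,b}=\binom{a+b}{a}1_{a+b}$; (R4) $(\omega_b\otimes1_a)X_{a,b}=\sum_{t=0}^{\min(a,b)}t!\,(M_{t,b-t}\otimes M_{a-t,t})(1_t\otimes X_{a-t,b-t}\otimes1_t)(1_t\otimes1_{a-t}\otimes\omega_{b-t}\otimes1_t)(S_{t,a-t}\otimes S_{b-t,t})$ and $X_{b,a}(\omega_b\otimes1_a)=\sum_{t=0}^{\min(a,b)}t!\,(M_{t,a-t}\otimes M_{b-t,t})(1_t\otimes1_{a-t}\otimes\omega_{b-t}\otimes1_t)(1_t\otimes X_{b-t,a-t}\otimes1_t)(S_{t,b-t}\otimes S_{a-t,t})$; (R5) $S_{a,b}\omega_{a+b}=(\omega_a\otimes\omega_b)S_{a,b}$, $\omega_{a+b}M_{a,b}=M_{a,b}(\omega_a\otimes\omega_b)$;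 (R6) $M^{(a)}(\omega_1\otimes\cdots\otimes\omega_1)S^{(a)}=a!\,\omega_a$; (R7) $D_{u,r}U_{r,u}=g_r(u)\otimes1_u$, $U_{r,u}D_{u,r}=1_u\otimes g_r(u)$; (R8) $(D_{u,b}\otimes1_a)(1_u\otimes X_{a,b})(U_{a,u}\otimes1_b)=(1_b\otimes U_{a,u})(X_{a,b}\otimes1_u)(1_a\otimes D_{u,b})+\sum_{t=1}^{\min(a,b)}t!\,(M_{t,b-t}\otimes1_u\otimes M_{a-t,t})(1_t\otimes1_{b-t}\otimes U_{a-t,u}\otimes1_t)(1_t\otimes X_{a-t,b-t}\otimes1_u\otimes1_t)(1_t\otimes1_{a-t}\otimes D_{u,b-t}\otimes1_t)(S_{t,a-t}\otimes1_u\otimes S_{b-t,t})$; (R9) $(1_u\otimes S_{b,c})U_{b+c,u}=(U_{b,u}\otimes1_c)(1_b\otimes U_{c,u})(S_{b,c}\otimes1_u)$, $(S_{a,b}\otimes1_u)D_{u,a+b}=(1_a\otimes D_{u,b})(D_{u,a}\otimes1_b)(1_u\otimes S_{a,b})$, $D_{u,b+c}(1_u\otimes M_{b,c})=(M_{b,c}\otimes1_u)(1_b\otimes D_{u,c})(D_{u,b}\otimes1_c)$, $U_{a+b,u}(M_{a,b}\otimes1_u)=(1_u\otimes M_{a,b})(U_{a,u}\otimes1_b)(1_a\otimes U_{b,u})$. *)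

(* Defs.v *)
(* A presentation of the affine Schur category AS as the
   strict K-linear monoidal category generated by the given objects and
   morphisms modulo the relations (R1)-(R9): morphisms are (well-typed)
   formal terms modulo the smallest congruence [ASeq] containing the axioms of
   a strict K-linear monoidal category and (R1)-(R9). *)
From HB Require Import structures.
From mathcomp Require Import all_boot all_algebra.
Set Implicit Arguments. Unset Strict Implicit. Unset Printing Implicit Defensive.
Import GRing.Theory.

Section AffineSchur.
Variable K : comPzRingType.

(* generating objects: black strands of thickness a >= 1, red strands u : K *)
Inductive gen := Blk of nat | Red of K.
Definition obj := seq gen.

(* formal morphism terms; [TComp g f] stands for g \circ f *)
Inductive tm :=
| TId of obj
| TComp of tm & tm
| TTens of tm & tm
| TZero of obj & obj
| TAdd of tm & tm
| TScale of K & tm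
| TMerge of nat & nat
| TSplit of nat & nat
| TCross of nat & nat
| TDot of nat
| TUp of nat & K
| TDown of K & nat.

Fixpoint src (f : tm) : obj :=
  match f with
  | TId x => x | TComp _ f => src f | TTens f g => src f ++ src g
  | TZero x _ => x | TAdd f _ => src f | TScale _ f => src f
  | TMerge a b => [:: Blk a; Blk b] | TSplit a b => [:: Blk (a + b)]
  | TCross a b => [:: Blk a; Blk b] | TDot a => [:: Blk a]
  | TUp a u => [:: Blk a; Red u] | TDown u a => [:: Red u; Blk a]
  end.

Fixpoint tgt (f : tm) : obj :=
  match f with
  | TId x => x | TComp g _ => tgt g | TTens f g => tgt f ++ tgt g
  | TZero _ y => y | TAdd f _ => tgt f | TScale _ f => tgt f
  | TMerge a b => [:: Blk (a + b)] | TSplit a b => [:: Blk a; Blk b]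
  | TCross a b => [:: Blk b; Blk a] | TDot a => [:: Blk a]
  | TUp a u => [:: Red u; Blk a] | TDown u a => [:: Blk a; Red u]
  end.

Definition valid (x : obj) : bool :=
  all (fun g => if g is Blk a then (0 < a)%N else true) x.

Fixpoint wt (f : tm) : Prop :=
  match f with
  | TId x => valid x
  | TComp g f => [/\ wt g, wt f & tgt f = src g]
  | TTens f g => wt f /\ wt g
  | TZero x y => valid x /\ valid y
  | TAdd f g => [/\ wt f, wt g, src f = src g & tgt f = tgt g]
  | TScale _ f => wt f
  | TMerge a b | TSplit a b | TCross a b => (0 < a)%N /\ (0 < b)%N
  | TDot a | TUp a _ | TDown _ a => (0 < a)%N
  end.

(* smart constructors implementing the thickness-0 conventions *)
Definition blk (a : nat) : obj := if a is 0 then [::] else [:: Blk a].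
Definition idb (a : nat) : tm := TId (blk a).
Definition idr (u : K) : tm := TId [:: Red u].
Definition cp (g f : tm) : tm := TComp g f.
Definition tn (f g : tm) : tm := TTens f g.
Definition Mg (a b : nat) : tm :=
  if (a == 0%N) || (b == 0%N) then idb (a + b) else TMerge a b.
Definition Sp (a b : nat) : tm :=
  if (a == 0%N) || (b == 0%N) then idb (a + b) else TSplit a b.
Definition Xc (a b : nat) : tm :=
  if (a == 0%N) || (b == 0%N) then idb (a + b) else TCross a b.
Definition dot (a : nat) : tm := if a is 0 then TId [::] else TDot a.
Definition Up (a : nat) (u : K) : tm := if a is 0 then idr u else TUp a u.
Definition Dn (u : K) (a : nat) : tm := if a is 0 then idr u else TDown u a.

Definition omega (a r : nat) : tm :=
  if r == 0%N then idb a
  else if (a < r)%N then TZero (blk a) (blk a)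
  else cp (Mg r (a - r)) (cp (tn (dot r) (idb (a - r))) (Sp r (a - r))).

Fixpoint Sn (a : nat) : tm :=
  if a is a'.+1 then cp (tn (idb 1) (Sn a')) (Sp 1 a') else TId [::].
Fixpoint Mn (a : nat) : tm :=
  if a is a'.+1 then cp (Mg 1 a') (tn (idb 1) (Mn a')) else TId [::].
Fixpoint dots1 (a : nat) : tm :=
  if a is a'.+1 then tn (dot 1) (dots1 a') else TId [::].

Definition tsum (x y : obj) (l : seq tm) : tm := foldr TAdd (TZero x y) l.

Definition gpol (r : nat) (u : K) : tm :=
  tsum (blk r) (blk r)
    [seq TScale ((-1) ^+ i * \prod_(j < i) (u + j%:R))%R (omega r (r - i))
    | i <- iota 0 r.+1].

Definition nK (n : nat) : K := n%:R.

Inductive ASax : tm -> tm -> Prop :=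
| ax_cpA f g h : ASax (cp (cp h g) f) (cp h (cp g f))
| ax_cp1r f : ASax (cp f (TId (src f))) f
| ax_cp1l f : ASax (cp (TId (tgt f)) f) f
| ax_tnA f g h : ASax (tn (tn f g) h) (tn f (tn g h))
| ax_tn1l f : ASax (tn (TId [::]) f) f
| ax_tn1r f : ASax (tn f (TId [::])) f
| ax_tnId x y : ASax (tn (TId x) (TId y)) (TId (x ++ y))
| ax_interchange f g f' g' :
    ASax (cp (tn f g) (tn f' g')) (tn (cp f f') (cp g g'))
| ax_addA f g h : ASax (TAdd (TAdd f g) h) (TAdd f (TAdd g h))
| ax_addC f g : ASax (TAdd f g) (TAdd g f)
| ax_add0 f : ASax (TAdd f (TZero (src f) (tgt f))) f
| ax_addN f : ASax (TAdd f (TScale (-1)%R f)) (TZero (src f) (tgt f))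
| ax_scale1 f : ASax (TScale 1%R f) f
| ax_scaleA c d f : ASax (TScale c (TScale d f)) (TScale (c * d)%R f)
| ax_scaleDl c d f : ASax (TScale (c + d)%R f) (TAdd (TScale c f) (TScale d f))
| ax_scaleDr c f g : ASax (TScale c (TAdd f g)) (TAdd (TScale c f) (TScale c g))
| ax_cpDl g g' f : ASax (cp (TAdd g g') f) (TAdd (cp g f) (cp g' f))
| ax_cpDr g f f' : ASax (cp g (TAdd f f')) (TAdd (cp g f) (cp g f'))
| ax_cpZl c g f : ASax (cp (TScale c g) f) (TScale c (cp g f))
| ax_cpZr c g f : ASax (cp g (TScale c f)) (TScale c (cp g f))
| ax_cp0l y z f : ASax (cp (TZero y z) f) (TZero (src f) z)
| ax_cp0r g x y : ASax (cp g (TZero x y)) (TZero x (tgt g))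
| ax_tnDl f f' g : ASax (tn (TAdd f f') g) (TAdd (tn f g) (tn f' g))
| ax_tnDr f g g' : ASax (tn f (TAdd g g')) (TAdd (tn f g) (tn f g'))
| ax_tnZl c f g : ASax (tn (TScale c f) g) (TScale c (tn f g))
| ax_tnZr c f g : ASax (tn f (TScale c g)) (TScale c (tn f g))
| ax_tn0l x y g : ASax (tn (TZero x y) g) (TZero (x ++ src g) (y ++ tgt g))
| ax_tn0r f x y : ASax (tn f (TZero x y)) (TZero (src f ++ x) (tgt f ++ y))
| ax_R1M a b c : (0 < a)%N -> (0 < b)%N -> (0 < c)%N ->
    ASax (cp (Mg (a + b) c) (tn (Mg a b) (idb c)))
         (cp (Mg a (b + c)) (tn (idb a) (Mg b c)))
| ax_R1S a b c : (0 < a)%N -> (0 < b)%N -> (0 < c)%N ->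
    ASax (cp (tn (Sp a b) (idb c)) (Sp (a + b) c))
         (cp (tn (idb a) (Sp b c)) (Sp a (b + c)))
| ax_R2 a b c d : (0 < a)%N -> (0 < b)%N -> (0 < c)%N -> (0 < d)%N ->
    (a + c = b + d)%N ->
    ASax (cp (Sp b d) (Mg a c))
      (tsum [:: Blk a; Blk c] [:: Blk b; Blk d]
        [seq cp (tn (Mg s (c - t)) (Mg (a - s) t))
             (cp (tn (tn (idb s) (Xc (a - s) (c - t))) (idb t))
                 (tn (Sp s (a - s)) (Sp (c - t) t)))
        | s <- iota 0 (minn a b).+1,
          t <- [seq t <- iota 0 (minn c d).+1 | t + a == s + d]])
| ax_R3 a b : (0 < a)%N -> (0 < b)%N ->
    ASax (cp (Mg a b) (Sp a b)) (TScale (nK 'C(a + b, a)) (idb (a + b)))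
| ax_R4l a b : (0 < a)%N -> (0 < b)%N ->
    ASax (cp (tn (dot b) (idb a)) (Xc a b))
      (tsum [:: Blk a; Blk b] [:: Blk b; Blk a]
        [seq TScale (nK t`!)
           (cp (tn (Mg t (b - t)) (Mg (a - t) t))
           (cp (tn (tn (idb t) (Xc (a - t) (b - t))) (idb t))
           (cp (tn (tn (tn (idb t) (idb (a - t))) (dot (b - t))) (idb t))
               (tn (Sp t (a - t)) (Sp (b - t) t)))))
        | t <- iota 0 (minn a b).+1])
| ax_R4r a b : (0 < a)%N -> (0 < b)%N ->
    ASax (cp (Xc b a) (tn (dot b) (idb a)))
      (tsum [:: Blk b; Blk a] [:: Blk a; Blk b]
        [seq TScale (nK t`!)
           (cp (tn (Mg t (a - t)) (Mg (b - t) t))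
           (cp (tn (tn (tn (idb t) (idb (a - t))) (dot (b - t))) (idb t))
           (cp (tn (tn (idb t) (Xc (b - t) (a - t))) (idb t))
               (tn (Sp t (b - t)) (Sp (a - t) t)))))
        | t <- iota 0 (minn a b).+1])
| ax_R5S a b : (0 < a)%N -> (0 < b)%N ->
    ASax (cp (Sp a b) (dot (a + b))) (cp (tn (dot a) (dot b)) (Sp a b))
| ax_R5M a b : (0 < a)%N -> (0 < b)%N ->
    ASax (cp (dot (a + b)) (Mg a b)) (cp (Mg a b) (tn (dot a) (dot b)))
| ax_R6 a : (0 < a)%N ->
    ASax (cp (Mn a) (cp (dots1 a) (Sn a))) (TScale (nK a`!) (dot a))
| ax_R7DU r u : (0 < r)%N ->
    ASax (cp (Dn u r) (Up r u)) (tn (gpol r u) (idr u))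
| ax_R7UD r u : (0 < r)%N ->
    ASax (cp (Up r u) (Dn u r)) (tn (idr u) (gpol r u))
| ax_R8 a b u : (0 < a)%N -> (0 < b)%N ->
    ASax (cp (tn (Dn u b) (idb a)) (cp (tn (idr u) (Xc a b)) (tn (Up a u) (idb b))))
      (TAdd
        (cp (tn (idb b) (Up a u)) (cp (tn (Xc a b) (idr u)) (tn (idb a) (Dn u b))))
        (tsum [:: Blk a; Red u; Blk b] [:: Blk b; Red u; Blk a]
          [seq TScale (nK t`!)
             (cp (tn (tn (Mg t (b - t)) (idr u)) (Mg (a - t) t))
             (cp (tn (tn (tn (idb t) (idb (b - t))) (Up (a - t) u)) (idb t))
             (cp (tn (tn (tn (idb t) (Xc (a - t) (b - t))) (idr u)) (idb t))
             (cp (tn (tn (tn (idb t) (idb (a - t))) (Dn u (b - t))) (idb t))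
                 (tn (tn (Sp t (a - t)) (idr u)) (Sp (b - t) t))))))
          | t <- iota 1 (minn a b)]))
| ax_R9a b c u : (0 < b)%N -> (0 < c)%N ->
    ASax (cp (tn (idr u) (Sp b c)) (Up (b + c) u))
         (cp (tn (Up b u) (idb c)) (cp (tn (idb b) (Up c u)) (tn (Sp b c) (idr u))))
| ax_R9b a b u : (0 < a)%N -> (0 < b)%N ->
    ASax (cp (tn (Sp a b) (idr u)) (Dn u (a + b)))
         (cp (tn (idb a) (Dn u b)) (cp (tn (Dn u a) (idb b)) (tn (idr u) (Sp a b))))
| ax_R9c b c u : (0 < b)%N -> (0 < c)%N ->
    ASax (cp (Dn u (b + c)) (tn (idr u) (Mg b c)))
         (cp (tn (Mg b c) (idr u)) (cp (tn (idb b) (Dn u c)) (tn (Dn u b) (idb c))))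
| ax_R9d a b u : (0 < a)%N -> (0 < b)%N ->
    ASax (cp (Up (a + b) u) (tn (Mg a b) (idr u)))
         (cp (tn (idr u) (Mg a b)) (cp (tn (Up a u) (idb b)) (tn (idb a) (Up b u)))).

Inductive ASeq : tm -> tm -> Prop :=
| eq_ax f g : ASax f g -> wt f -> wt g -> src f = src g -> tgt f = tgt g ->
    ASeq f g
| eq_refl f : wt f -> ASeq f f
| eq_sym f g : ASeq f g -> ASeq g f
| eq_trans f g h : ASeq f g -> ASeq g h -> ASeq f h
| eq_cp g g' f f' : ASeq g g' -> ASeq f f' -> tgt f = src g ->
    ASeq (cp g f) (cp g' f')
| eq_tn f f' g g' : ASeq f f' -> ASeq g g' -> ASeq (tn f g) (tn f' g')
| eq_add f f' g g' : ASeq f f' -> ASeq g g' -> src f = src g -> tgt f = tgt g ->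
    ASeq (TAdd f g) (TAdd f' g')
| eq_scale c f f' : ASeq f f' -> ASeq (TScale c f) (TScale c f').

End AffineSchur.

(* Main.v *)
Require Import Defs.
From mathcomp Require Import all_boot all_algebra.
From mathcomp Require Import zify.
Set Implicit Arguments. Unset Strict Implicit. Unset Printing Implicit Defensive.

Lemma ASeq_wt (K : comPzRingType) (f g : tm K) :
  ASeq f g -> [/\ wt f, wt g, src f = src g & tgt f = tgt g].
Proof.
elim=> {f g}.
- by move=> f g _ *.
- by [].
- by move=> f g _ [].
- by move=> f g h _ [? ? ? ?] _ [? ? ? ?]; split=> //; congruence.
- move=> g g' f f' _ [? ? ? ?] _ [? ? ? ?] e; split=> //=; split=> //; congruence.
- by move=> f f' g g' _ [? ? ? ?] _ [? ? ? ?]; split=> //=; congruence.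
- move=> f f' g g' _ [? ? ? ?] _ [? ? ? ?] e1 e2; split=> //=; split=> //; congruence.
- by move=> c f f' _ [].
Qed.

Lemma valid_cat (K : comPzRingType) (x y : obj K) : valid (x ++ y) = valid x && valid y.
Proof. by rewrite /valid all_cat. Qed.

Lemma wt_valid (K : comPzRingType) (f : tm K) : wt f -> valid (src f) /\ valid (tgt f).
Proof.
elim: f => //=.
- by move=> g IHg f IHf [/IHg [? ?] /IHf [? ?] ?].
- by move=> f IHf g IHg [/IHf [? ?] /IHg [? ?]]; rewrite !valid_cat; split; apply/andP.
- by move=> f IHf g IHg [/IHf [? ?] /IHg [? ?]].
- by move=> a b [h1 h2]; rewrite h1 h2 addn_gt0 h1.
- by move=> a b [h1 h2]; rewrite h1 h2 addn_gt0 h1.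
- by move=> a b [h1 h2]; rewrite h1 h2.
- by move=> a ->.
- by move=> a u ->.
- by move=> u a ->.
Qed.

Ltac vld := match goal with
  | H : wt ?f |- is_true (valid (src ?f)) => exact (proj1 (wt_valid H))
  | H : wt ?f |- is_true (valid (tgt ?f)) => exact (proj2 (wt_valid H))
  end.

Ltac side := simpl; repeat (match goal with |- _ /\ _ => split | |- and3 _ _ _ => split | |- and4 _ _ _ _ => split end);
  try done; try vld; try congruence.

Ltac ax c := apply eq_ax; [apply c | side.. ].

Section Cat.
Variable K : comPzRingType.
Implicit Types f g h : tm K.

Lemma eqR f : wt f -> ASeq f f. Proof. exact: Defs.eq_refl. Qed.
Lemma eqT f g h : ASeq f g -> ASeq g h -> ASeq f h. Proof. exact: Defs.eq_trans. Qed.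
Lemma eqS f g : ASeq f g -> ASeq g f. Proof. exact: Defs.eq_sym. Qed.

Lemma cp1r f : wt f -> ASeq (cp f (TId (src f))) f.
Proof. by move=> w; ax (@ax_cp1r K). Qed.
Lemma cp1l f : wt f -> ASeq (cp (TId (tgt f)) f) f.
Proof. by move=> w; ax (@ax_cp1l K). Qed.
Lemma cpA f g h : wt f -> wt g -> wt h -> tgt f = src g -> tgt g = src h ->
  ASeq (cp (cp h g) f) (cp h (cp g f)).
Proof. by move=> *; ax (@ax_cpA K). Qed.
Lemma tnA f g h : wt f -> wt g -> wt h -> ASeq (tn (tn f g) h) (tn f (tn g h)).
Proof. by move=> *; ax (@ax_tnA K); rewrite catA. Qed.
Lemma tn1l f : wt f -> ASeq (tn (TId [::]) f) f.
Proof. by move=> *; ax (@ax_tn1l K). Qed.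
Lemma tn1r f : wt f -> ASeq (tn f (TId [::])) f.
Proof. by move=> *; ax (@ax_tn1r K); rewrite cats0. Qed.
Lemma tnId (x y : obj K) : valid x -> valid y -> ASeq (tn (TId x) (TId y)) (TId (x ++ y)).
Proof. by move=> *; ax (@ax_tnId K); rewrite valid_cat; apply/andP. Qed.
Lemma interch f g f' g' : wt f -> wt g -> wt f' -> wt g' -> tgt f' = src f -> tgt g' = src g ->
  ASeq (cp (tn f g) (tn f' g')) (tn (cp f f') (cp g g')).
Proof. by move=> *; ax (@ax_interchange K). Qed.
Lemma addA f g h : wt f -> wt g -> wt h -> src f = src g -> src g = src h ->
  tgt f = tgt g -> tgt g = tgt h ->
  ASeq (TAdd (TAdd f g) h) (TAdd f (TAdd g h)).
Proof. by move=> *; ax (@ax_addA K). Qed.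
Lemma addC f g : wt f -> wt g -> src f = src g -> tgt f = tgt g -> ASeq (TAdd f g) (TAdd g f).
Proof. by move=> *; ax (@ax_addC K). Qed.
Lemma add0 f : wt f -> ASeq (TAdd f (TZero (src f) (tgt f))) f.
Proof. by move=> *; ax (@ax_add0 K). Qed.
Lemma addN f : wt f -> ASeq (TAdd f (TScale (-1)%R f)) (TZero (src f) (tgt f)).
Proof. by move=> *; ax (@ax_addN K). Qed.
Lemma scale1 f : wt f -> ASeq (TScale 1%R f) f.
Proof. by move=> *; ax (@ax_scale1 K). Qed.
Lemma scaleA c d f : wt f -> ASeq (TScale c (TScale d f)) (TScale (c * d)%R f).
Proof. by move=> *; ax (@ax_scaleA K). Qed.
Lemma cpDl g g' f : wt g -> wt g' -> wt f -> src g = src g' -> tgt g = tgt g' -> tgt f = src g ->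
  ASeq (cp (TAdd g g') f) (TAdd (cp g f) (cp g' f)).
Proof. by move=> *; ax (@ax_cpDl K). Qed.
Lemma cpDr g f f' : wt g -> wt f -> wt f' -> src f = src f' -> tgt f = tgt f' -> tgt f = src g ->
  ASeq (cp g (TAdd f f')) (TAdd (cp g f) (cp g f')).
Proof. by move=> *; ax (@ax_cpDr K). Qed.
Lemma cpZl c g f : wt g -> wt f -> tgt f = src g -> ASeq (cp (TScale c g) f) (TScale c (cp g f)).
Proof. by move=> *; ax (@ax_cpZl K). Qed.
Lemma cpZr c g f : wt g -> wt f -> tgt f = src g -> ASeq (cp g (TScale c f)) (TScale c (cp g f)).
Proof. by move=> *; ax (@ax_cpZr K). Qed.
Lemma cp0l (y z : obj K) f : wt f -> valid z -> tgt f = y ->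
  ASeq (cp (TZero y z) f) (TZero (src f) z).
Proof. by move=> w vz e; ax (@ax_cp0l K); subst; vld. Qed.
Lemma cp0r (x y : obj K) g : wt g -> valid x -> y = src g ->
  ASeq (cp g (TZero x y)) (TZero x (tgt g)).
Proof. by move=> w vz e; ax (@ax_cp0r K); subst; vld. Qed.
Lemma tnDl f f' g : wt f -> wt f' -> wt g -> src f = src f' -> tgt f = tgt f' ->
  ASeq (tn (TAdd f f') g) (TAdd (tn f g) (tn f' g)).
Proof. by move=> *; ax (@ax_tnDl K). Qed.
Lemma tnDr f g g' : wt f -> wt g -> wt g' -> src g = src g' -> tgt g = tgt g' ->
  ASeq (tn f (TAdd g g')) (TAdd (tn f g) (tn f g')).
Proof. by move=> *; ax (@ax_tnDr K). Qed.
Lemma tnZl c f g : wt f -> wt g -> ASeq (tn (TScale c f) g) (TScale c (tn f g)).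
Proof. by move=> *; ax (@ax_tnZl K). Qed.
Lemma tnZr c f g : wt f -> wt g -> ASeq (tn f (TScale c g)) (TScale c (tn f g)).
Proof. by move=> *; ax (@ax_tnZr K). Qed.
Lemma tn0l (x y : obj K) g : wt g -> valid x -> valid y ->
  ASeq (tn (TZero x y) g) (TZero (x ++ src g) (y ++ tgt g)).
Proof. by move=> *; ax (@ax_tn0l K); rewrite valid_cat; apply/andP; split=> //; vld. Qed.
Lemma tn0r f (x y : obj K) : wt f -> valid x -> valid y ->
  ASeq (tn f (TZero x y)) (TZero (src f ++ x) (tgt f ++ y)).
Proof. by move=> *; ax (@ax_tn0r K); rewrite valid_cat; apply/andP; split=> //; vld. Qed.

Lemma cpL g g' f : ASeq g g' -> wt f -> tgt f = src g -> ASeq (cp g f) (cp g' f).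
Proof. by move=> e w t; apply: eq_cp => //; apply: Defs.eq_refl. Qed.
Lemma cpR g f f' : ASeq f f' -> wt g -> tgt f = src g -> ASeq (cp g f) (cp g f').
Proof. by move=> e w t; apply: eq_cp => //; apply: Defs.eq_refl. Qed.
Lemma tnL f f' g : ASeq f f' -> wt g -> ASeq (tn f g) (tn f' g).
Proof. by move=> e w; apply: eq_tn => //; apply: Defs.eq_refl. Qed.
Lemma tnR f g g' : ASeq g g' -> wt f -> ASeq (tn f g) (tn f g').
Proof. by move=> e w; apply: eq_tn => //; apply: Defs.eq_refl. Qed.
End Cat.

Section Whisk.
Variable K : comPzRingType.
Variable u : K.
Implicit Types f g h X : tm K.

Definition Wo (s : bool) (x : obj K) := if s then x ++ [:: Red u] else Red u :: x.
Definition W (s : bool) f := if s then tn f (idr u) else tn (idr u) f.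
Definition End b f := [/\ wt f, src f = [:: Blk K b] & tgt f = [:: Blk K b]].
Definition Com X s t f := ASeq (cp X (W s f)) (cp (W t f) X).

Lemma W_wt s f : wt f -> wt (W s f). Proof. by case: s. Qed.
Lemma W_src s f : src (W s f) = Wo s (src f). Proof. by case: s. Qed.
Lemma W_tgt s f : tgt (W s f) = Wo s (tgt f). Proof. by case: s. Qed.
Hint Resolve W_wt : core.

Ltac sd := simpl; rewrite ?W_src ?W_tgt /=; repeat (match goal with |- _ /\ _ => split | |- and3 _ _ _ => split | |- and4 _ _ _ _ => split end);
  try done; try vld; try congruence; auto.

Lemma RR : ASeq (cp (idr u) (idr u)) (idr u).
Proof. exact: (@cp1r K (idr u)). Qed.

Lemma W_cong s f f' : ASeq f f' -> ASeq (W s f) (W s f').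
Proof. by move=> e; case: s; [apply: tnL | apply: tnR]. Qed.

Lemma W_cp s f g : wt f -> wt g -> tgt f = src g -> ASeq (W s (cp g f)) (cp (W s g) (W s f)).
Proof.
move=> wf wg e; case: s => /=.
- apply: eqT; first by refine (tnR (eqS RR) _); sd.
  by apply: eqS; apply: interch; sd.
- apply: eqT; first by refine (tnL (eqS RR) _); sd.
  by apply: eqS; apply: interch; sd.
Qed.

Lemma W_add s f g : wt f -> wt g -> src f = src g -> tgt f = tgt g ->
  ASeq (W s (TAdd f g)) (TAdd (W s f) (W s g)).
Proof. by move=> *; case: s => /=; [apply: tnDl | apply: tnDr]; sd. Qed.

Lemma W_scale s c f : wt f -> ASeq (W s (TScale c f)) (TScale c (W s f)).
Proof. by move=> *; case: s => /=; [apply: tnZl | apply: tnZr]; sd. Qed.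

Lemma W_zero s (x y : obj K) : valid x -> valid y -> ASeq (W s (TZero x y)) (TZero (Wo s x) (Wo s y)).
Proof. by move=> vx vy; case: s; [exact: (@tn0l K x y (idr u) isT vx vy) | exact: (@tn0r K (idr u) x y isT vx vy)]. Qed.

Lemma W_id s (x : obj K) : valid x -> ASeq (W s (TId x)) (TId (Wo s x)).
Proof. by move=> vx; case: s; [exact: (@tnId K x [:: Red u] vx isT) | exact: (@tnId K [:: Red u] x isT vx)]. Qed.

Lemma add_cancel (A B A' B' : tm K) : wt A -> wt B -> wt A' -> wt B' ->
  src A = src B -> tgt A = tgt B -> src A' = src B' -> tgt A' = tgt B' ->
  ASeq (TAdd A B) (TAdd A' B') -> ASeq B B' -> ASeq A A'.
Proof.
move=> wA wB wA' wB' s1 t1 s2 t2 e eB.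
have [_ _ sB tB] := ASeq_wt eB.
apply: eqT; first by apply: eqS; apply: add0.
apply: eqT.
  apply: eq_add; [by apply: eqR | | by [] | by []].
  by apply: eqS; rewrite s1 t1; apply: addN.
apply: eqT; first by apply: eqS; apply: addA; sd.
apply: eqT.
  apply: eq_add; [exact: e | apply: eq_scale; exact: eB | by sd | by sd].
apply: eqT; first by apply: addA; sd.
apply: eqT.
  apply: eq_add; [by apply: eqR | | by [] | by []].
  by apply: addN.
by rewrite -s2 -t2; apply: add0.
Qed.

Section ComX.
Variables (X : tm K) (s t : bool) (b : nat).
Hypotheses (wX : wt X) (sX : src X = Wo s [:: Blk K b]) (tX : tgt X = Wo t [:: Blk K b]).

Lemma Com_cong f f' : ASeq f f' -> End b f -> Com X s t f -> Com X s t f'.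
Proof.
move=> e [wf sf tf] c.
have [_ wf' sf' tf'] := ASeq_wt e.
apply: eqT; first by refine (cpR (eqS (W_cong s e)) _ _); sd.
apply: eqT; first exact: c.
by refine (cpL (W_cong t e) _ _); sd.
Qed.

Lemma Com_id : 0 < b -> Com X s t (TId [:: Blk K b]).
Proof.
move=> b0.
have vb : valid [:: Blk K b] by rewrite /valid /= b0.
apply: eqT; first by refine (cpR (W_id s vb) _ _); sd.
apply: eqT; first by rewrite -sX; apply: cp1r.
apply: eqT; first by apply: eqS; apply: cp1l.
by rewrite tX; refine (cpL (eqS (W_id t vb)) _ _); sd.
Qed.

Lemma Com_cp f g : End b f -> End b g -> Com X s t f -> Com X s t g -> Com X s t (cp g f).
Proof.
move=> [wf sf tf] [wg sg tg] cf cg.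
apply: eqT; first by refine (cpR (W_cp s wf wg _) _ _); sd.
apply: eqT; first by apply: eqS; apply: cpA; sd.
apply: eqT; first by refine (cpL cg _ _); sd.
apply: eqT; first by apply: cpA; sd.
apply: eqT; first by refine (cpR cf _ _); sd.
apply: eqT; first by apply: eqS; apply: cpA; sd.
by refine (cpL (eqS (W_cp t wf wg _)) _ _); sd.
Qed.

Lemma Com_add f g : End b f -> End b g -> Com X s t f -> Com X s t g -> Com X s t (TAdd f g).
Proof.
move=> [wf sf tf] [wg sg tg] cf cg.
have [_ _ s1 t1] := ASeq_wt cf.
have [_ _ s2 t2] := ASeq_wt cg.
apply: eqT; first by refine (cpR (W_add s wf wg _ _) _ _); sd.
apply: eqT; first by apply: cpDr; sd.
apply: eqT; first by apply: eq_add; [exact: cf | exact: cg | sd | sd].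
apply: eqT; first by apply: eqS; apply: cpDl; sd.
by refine (cpL (eqS (W_add t wf wg _ _)) _ _); sd.
Qed.

Lemma Com_scale c f : End b f -> Com X s t f -> Com X s t (TScale c f).
Proof.
move=> [wf sf tf] cf.
apply: eqT; first by refine (cpR (W_scale s c wf) _ _); sd.
apply: eqT; first by apply: cpZr; sd.
apply: eqT; first by apply: eq_scale; exact: cf.
apply: eqT; first by apply: eqS; apply: cpZl; sd.
by refine (cpL (eqS (W_scale t c wf)) _ _); sd.
Qed.

Lemma Com_zero : 0 < b -> Com X s t (TZero [:: Blk K b] [:: Blk K b]).
Proof.
move=> b0.
have vb : valid [:: Blk K b] by rewrite /valid /= b0.
have vs : forall s', valid (Wo s' [:: Blk K b]) by case=> /=; rewrite /valid /= b0.
apply: eqT; first by refine (cpR (W_zero s vb vb) _ _); sd.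
apply: eqT; first by apply: cp0r; sd.
apply: eqS; apply: eqT; first by refine (cpL (W_zero t vb vb) _ _); sd.
apply: eqT; first by apply: cp0l; sd.
by rewrite sX tX; apply: eqR.
Qed.

Lemma Com_cancel f g : End b f -> End b g -> Com X s t (TAdd f g) -> Com X s t g -> Com X s t f.
Proof.
move=> [wf sf tf] [wg sg tg] cfg cg.
have [_ _ s2 t2] := ASeq_wt cg.
apply: (@add_cancel _ (cp X (W s g)) _ (cp (W t g) X)); try by sd.
apply: eqT; first by apply: eqS; apply: cpDr; sd.
apply: eqT; first by refine (cpR (eqS (W_add s wf wg _ _)) _ _); sd.
apply: eqT; first exact: cfg.
apply: eqT; first by refine (cpL (W_add t wf wg _ _) _ _); sd.
by apply: cpDl; sd.
Qed.
End ComX.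
End Whisk.

Section Words.
Variable K : comPzRingType.
Implicit Types f g h a b : tm K.
Implicit Types l m p q : seq (tm K).

Fixpoint clist h l : tm K := if l is g :: l' then cp h (clist g l') else h.
Fixpoint chn h l : Prop := if l is g :: l' then [/\ wt h, tgt g = src h & chn g l'] else wt h.

Lemma clist_tgt h l : tgt (clist h l) = tgt h.
Proof. by case: l. Qed.
Lemma clist_src h l : src (clist h l) = src (last h l).
Proof. by elim: l h => //= g l IH h; rewrite IH. Qed.
Lemma clist_wt h l : chn h l -> wt (clist h l).
Proof. by elim: l h => //= g l IH h [w e c]; split=> //; [apply: IH | rewrite clist_tgt]. Qed.

Lemma chn_cat h l g m : chn h (l ++ g :: m) <-> [/\ chn h l, chn g m & tgt g = src (last h l)].
Proof.
elim: l h => [|k l IH] h /=.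
- split; first by case=> w e c; split.
  by case=> w c e; split.
- split.
  + by case=> w e /IH [c1 c2 e2]; split.
  + by case=> [[w e c1] c2 e2]; split=> //; apply/IH.
Qed.

Lemma cl_cat h l g m : chn h (l ++ g :: m) ->
  ASeq (clist h (l ++ g :: m)) (cp (clist h l) (clist g m)).
Proof.
elim: l h => [|k l IH] h /=.
- by move=> c; apply: eqR; exact: (clist_wt (l := g :: m)).
- move=> [w e c].
  have := c; rewrite chn_cat => -[c1 c2 e2].
  apply: eqT; first by apply: cpR (IH _ c) _ _ => //; rewrite clist_tgt.
  apply: eqS; apply: cpA; rewrite ?clist_tgt ?clist_src //; try exact: clist_wt.
Qed.

Lemma cl_mid0 a l a' l' q : ASeq (clist a l) (clist a' l') ->
  chn a (l ++ q) -> chn a' (l' ++ q) ->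
  ASeq (clist a (l ++ q)) (clist a' (l' ++ q)).
Proof.
move=> e c1 c2.
case: q c1 c2 => [|g q] c1 c2; first by rewrite !cats0.
have := c1; rewrite chn_cat => -[d1 d2 d3].
have := c2; rewrite chn_cat => -[d1' d2' d3'].
apply: eqT; first exact: cl_cat.
apply: eqT; last by apply: eqS; exact: cl_cat.
apply: eq_cp => //; first by apply: eqR; exact: clist_wt.
by rewrite clist_tgt clist_src.
Qed.

Lemma cl_mid x p a l a' l' q : ASeq (clist a l) (clist a' l') ->
  chn x (p ++ a :: l ++ q) -> chn a' (l' ++ q) ->
  ASeq (clist x (p ++ a :: l ++ q)) (clist x (p ++ a' :: l' ++ q)).
Proof.
move=> e.
have [w1 w2 es et] := ASeq_wt e.
elim: p x => [|y p IH] x /=.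
- move=> [w ex c] c2.
  apply: cpR; [exact: cl_mid0 | done | by rewrite clist_tgt].
- move=> [w ex c] c2.
  apply: cpR; [exact: IH | done | by rewrite clist_tgt].
Qed.
End Words.

Ltac side2 := simpl; repeat (match goal with |- _ /\ _ => split | |- and3 _ _ _ => split | |- and4 _ _ _ _ => split end);
  try done; try vld; try congruence; try lia.

Section Ax.
Variable K : comPzRingType.
Variable u : K.
Notation R := (TId [:: Red u]).
Notation I b := (TId [:: Blk K b]).

Lemma idb_pos a : 0 < a -> idb K a = I a. Proof. by case: a. Qed.
Lemma blk_pos a : 0 < a -> blk K a = [:: Blk K a]. Proof. by case: a. Qed.

Lemma R9a b c : 0 < b -> 0 < c ->
  ASeq (cp (tn R (TSplit K b c)) (TUp (b + c) u))
       (cp (tn (TUp b u) (I c)) (cp (tn (I b) (TUp c u)) (tn (TSplit K b c) R))).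
Proof.
case: b => // b; case: c => // c _ _.
by apply: eq_ax; [exact (@ax_R9a K b.+1 c.+1 u isT isT) | side2..].
Qed.

Lemma R9b a b : 0 < a -> 0 < b ->
  ASeq (cp (tn (TSplit K a b) R) (TDown u (a + b)))
       (cp (tn (I a) (TDown u b)) (cp (tn (TDown u a) (I b)) (tn R (TSplit K a b)))).
Proof.
case: a => // a; case: b => // b _ _.
by apply: eq_ax; [exact (@ax_R9b K a.+1 b.+1 u isT isT) | side2..].
Qed.

Lemma R9c b c : 0 < b -> 0 < c ->
  ASeq (cp (TDown u (b + c)) (tn R (TMerge K b c)))
       (cp (tn (TMerge K b c) R) (cp (tn (I b) (TDown u c)) (tn (TDown u b) (I c)))).
Proof.
case: b => // b; case: c => // c _ _.
by apply: eq_ax; [exact (@ax_R9c K b.+1 c.+1 u isT isT) | side2..].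
Qed.

Lemma R9d a b : 0 < a -> 0 < b ->
  ASeq (cp (TUp (a + b) u) (tn (TMerge K a b) R))
       (cp (tn R (TMerge K a b)) (cp (tn (TUp a u) (I b)) (tn (I a) (TUp b u)))).
Proof.
case: a => // a; case: b => // b _ _.
by apply: eq_ax; [exact (@ax_R9d K a.+1 b.+1 u isT isT) | side2..].
Qed.
End Ax.

Ltac rwst := repeat match goal with H : src ?g = _ |- context[src ?g] => is_var g; rewrite H | H : tgt ?g = _ |- context[tgt ?g] => is_var g; rewrite H end.
Ltac sd3 := simpl; rewrite ?W_src ?W_tgt ?clist_src ?clist_tgt /=; rwst; simpl; repeat (match goal with |- _ /\ _ => split | |- and3 _ _ _ => split | |- and4 _ _ _ _ => split end);
  try done; try vld; try congruence; try lia.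

Section Gen.
Variable K : comPzRingType.
Implicit Types f g a b : tm K.

Lemma slide f g : wt f -> wt g ->
  ASeq (cp (tn (TId (tgt f)) g) (tn f (TId (src g))))
       (cp (tn f (TId (tgt g))) (tn (TId (src f)) g)).
Proof.
move=> wf wg.
have [vsf vtf] := wt_valid wf. have [vsg vtg] := wt_valid wg.
apply: eqT; first by apply: interch; sd3.
apply: eqT; first by apply: eq_tn; [apply: cp1l | apply: cp1r].
apply: eqS.
apply: eqT; first by apply: interch; sd3.
by apply: eq_tn; [apply: cp1r | apply: cp1l].
Qed.

Lemma tn_cpI a b (x : obj K) : wt a -> wt b -> tgt b = src a -> valid x ->
  ASeq (cp (tn a (TId x)) (tn b (TId x))) (tn (cp a b) (TId x)).
Proof.
move=> wa wb e vx.
apply: eqT; first by apply: interch; sd3.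
by apply: tnR; [apply: (@cp1r K (TId x)) | sd3].
Qed.
End Gen.

Section L3.
Variable K : comPzRingType.
Variable u : K.
Notation R := (TId [:: Red u]).
Notation I b := (TId [:: Blk K b]).
Variables (r s : nat) (f : tm K).
Hypotheses (r0 : 0 < r) (s0 : 0 < s) (wf : wt f) (sf : src f = [:: Blk K r]) (tf : tgt f = [:: Blk K r]).
Notation M := (TMerge K r s).
Notation S := (TSplit K r s).
Notation X := (tn f (I s)).
Notation F := (cp M (cp X S)).

Lemma vI b : 0 < b -> valid [:: Blk K b]. Proof. by rewrite /valid /= => ->. Qed.

Lemma L3U : Com u (TUp r u) true false f -> Com u (TUp (r + s) u) true false F.
Proof.
move=> cf; rewrite /Com /W.
have hA : ASeq (tn F R) (clist (tn M R) [:: tn X R; tn S R]).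
  apply: eqT; first by apply: (@W_cp K u true (cp X S) M); sd3.
  by apply: cpR; [apply: (@W_cp K u true S X) | |]; sd3.
have hB : ASeq (clist (TUp (r + s) u) [:: tn M R; tn X R; tn S R])
               (clist (tn R M) [:: tn (TUp r u) (I s); tn (I r) (TUp s u); tn X R; tn S R]).
  by apply: (@cl_mid0 K _ [:: tn M R] _ [:: tn (TUp r u) (I s); tn (I r) (TUp s u)] [:: tn X R; tn S R]);
    [exact: R9d | sd3 | sd3].
have hC0 : ASeq (clist (tn (I r) (TUp s u)) [:: tn X R]) (clist (tn (tn f R) (I s)) [:: tn (I r) (TUp s u)]).
  rewrite /=.
  apply: eqT.
    apply: cpR; [ | sd3 | sd3].
    apply: eqT; first by apply: tnA; sd3.
    by apply: tnR; [apply: (@tnId K [:: Blk K s] [:: Red u]); rewrite ?vI | sd3].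
  have := slide wf (s0 : wt (TUp s u)) ; rewrite tf sf /= => h.
  apply: eqT; first by apply: h.
  apply: cpL; [ | sd3 | sd3].
  apply: eqT; first by apply: tnR; [apply: eqS; apply: (@tnId K [:: Red u] [:: Blk K s]); rewrite ?vI | sd3].
  by apply: eqS; apply: tnA; sd3.
have hC : ASeq (clist (tn R M) [:: tn (TUp r u) (I s); tn (I r) (TUp s u); tn X R; tn S R])
               (clist (tn R M) [:: tn (TUp r u) (I s); tn (tn f R) (I s); tn (I r) (TUp s u); tn S R]).
  by apply: (@cl_mid K _ [:: tn (TUp r u) (I s)] _ [:: tn X R] _ [:: tn (I r) (TUp s u)] [:: tn S R] hC0); sd3.
have hD0 : ASeq (clist (tn (TUp r u) (I s)) [:: tn (tn f R) (I s)]) (clist (tn (tn R f) (I s)) [:: tn (TUp r u) (I s)]).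
  rewrite /=.
  apply: eqT; first by apply: tn_cpI; rewrite ?vI; sd3.
  apply: eqT; first by apply: tnL; [exact: cf | sd3].
  by apply: eqS; apply: tn_cpI; rewrite ?vI; sd3.
have hD : ASeq (clist (tn R M) [:: tn (TUp r u) (I s); tn (tn f R) (I s); tn (I r) (TUp s u); tn S R])
               (clist (tn R M) [:: tn (tn R f) (I s); tn (TUp r u) (I s); tn (I r) (TUp s u); tn S R]).
  by apply: (@cl_mid K _ [::] _ [:: tn (tn f R) (I s)] _ [:: tn (TUp r u) (I s)] [:: tn (I r) (TUp s u); tn S R] hD0); sd3.
have hE : ASeq (clist (tn R M) [:: tn (tn R f) (I s); tn (TUp r u) (I s); tn (I r) (TUp s u); tn S R])
               (clist (tn R M) [:: tn (tn R f) (I s); tn R S; TUp (r + s) u]).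
  apply: (@cl_mid K _ [:: tn (tn R f) (I s)] _ [:: tn (I r) (TUp s u); tn S R] _ [:: TUp (r + s) u] [::]); try sd3.
  by apply: eqS; apply: R9a.
have hF : ASeq (clist (tn R M) [:: tn (tn R f) (I s); tn R S; TUp (r + s) u])
               (clist (tn R M) [:: tn R X; tn R S; TUp (r + s) u]).
  apply: (@cl_mid K _ [::] _ [::] _ [::] [:: tn R S; TUp (r + s) u]); try sd3.
  by apply: tnA; sd3.
apply: eqT; first by apply: cpR hA _ _; sd3.
apply: eqT; first exact: hB.
apply: eqT; first exact: hC.
apply: eqT; first exact: hD.
apply: eqT; first exact: hE.
apply: eqT; first exact: hF.
apply: eqT; first by apply: (@cl_cat K _ [:: tn R X; tn R S] _ [::]); sd3.
apply: cpL; [ | sd3 | sd3].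
apply: eqS.
apply: eqT; first by apply: (@W_cp K u false (cp X S) M); sd3.
by apply: cpR; [apply: (@W_cp K u false S X) | |]; sd3.
Qed.

Lemma L3D : Com u (TDown u r) false true f -> Com u (TDown u (r + s)) false true F.
Proof.
move=> cf; rewrite /Com /W.
have hA : ASeq (tn R F) (clist (tn R M) [:: tn R X; tn R S]).
  apply: eqT; first by apply: (@W_cp K u false (cp X S) M); sd3.
  by apply: cpR; [apply: (@W_cp K u false S X) | |]; sd3.
have hB : ASeq (clist (TDown u (r + s)) [:: tn R M; tn R X; tn R S])
               (clist (tn M R) [:: tn (I r) (TDown u s); tn (TDown u r) (I s); tn R X; tn R S]).
  by apply: (@cl_mid0 K _ [:: tn R M] _ [:: tn (I r) (TDown u s); tn (TDown u r) (I s)] [:: tn R X; tn R S]);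
    [exact: R9c | sd3 | sd3].
have hC0 : ASeq (clist (tn (TDown u r) (I s)) [:: tn R X]) (clist (tn (tn f R) (I s)) [:: tn (TDown u r) (I s)]).
  rewrite /=.
  apply: eqT; first by apply: cpR; [apply: eqS; apply: tnA | |]; sd3.
  apply: eqT; first by apply: tn_cpI; rewrite ?vI; sd3.
  apply: eqT; first by apply: tnL; [exact: cf | sd3].
  by apply: eqS; apply: tn_cpI; rewrite ?vI; sd3.
have hC : ASeq (clist (tn M R) [:: tn (I r) (TDown u s); tn (TDown u r) (I s); tn R X; tn R S])
               (clist (tn M R) [:: tn (I r) (TDown u s); tn (tn f R) (I s); tn (TDown u r) (I s); tn R S]).
  by apply: (@cl_mid K _ [:: tn (I r) (TDown u s)] _ [:: tn R X] _ [:: tn (TDown u r) (I s)] [:: tn R S] hC0); sd3.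
have hD0 : ASeq (clist (tn (I r) (TDown u s)) [:: tn (tn f R) (I s)]) (clist (tn X R) [:: tn (I r) (TDown u s)]).
  rewrite /=.
  apply: eqT.
    apply: cpR; [ | sd3 | sd3].
    apply: eqT; first by apply: tnA; sd3.
    by apply: tnR; [apply: (@tnId K [:: Red u] [:: Blk K s]); rewrite ?vI | sd3].
  have := slide wf (s0 : wt (TDown u s)) ; rewrite tf sf /= => h.
  apply: eqT; first by apply: h.
  apply: cpL; [ | sd3 | sd3].
  apply: eqT; first by apply: tnR; [apply: eqS; apply: (@tnId K [:: Blk K s] [:: Red u]); rewrite ?vI | sd3].
  by apply: eqS; apply: tnA; sd3.
have hD : ASeq (clist (tn M R) [:: tn (I r) (TDown u s); tn (tn f R) (I s); tn (TDown u r) (I s); tn R S])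
               (clist (tn M R) [:: tn X R; tn (I r) (TDown u s); tn (TDown u r) (I s); tn R S]).
  by apply: (@cl_mid K _ [::] _ [:: tn (tn f R) (I s)] _ [:: tn (I r) (TDown u s)] [:: tn (TDown u r) (I s); tn R S] hD0); sd3.
have hE : ASeq (clist (tn M R) [:: tn X R; tn (I r) (TDown u s); tn (TDown u r) (I s); tn R S])
               (clist (tn M R) [:: tn X R; tn S R; TDown u (r + s)]).
  apply: (@cl_mid K _ [:: tn X R] _ [:: tn (TDown u r) (I s); tn R S] _ [:: TDown u (r + s)] [::]); try sd3.
  by apply: eqS; apply: R9b.
apply: eqT; first by apply: cpR hA _ _; sd3.
apply: eqT; first exact: hB.
apply: eqT; first exact: hC.
apply: eqT; first exact: hD.
apply: eqT; first exact: hE.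
apply: eqT; first by apply: (@cl_cat K _ [:: tn X R; tn S R] _ [::]); sd3.
apply: cpL; [ | sd3 | sd3].
apply: eqS.
apply: eqT; first by apply: (@W_cp K u true (cp X S) M); sd3.
by apply: cpR; [apply: (@W_cp K u true S X) | |]; sd3.
Qed.
End L3.

Section Om.
Variable K : comPzRingType.
Notation I b := (TId [:: Blk K b]).

Lemma omega_0 a : 0 < a -> omega K a 0 = I a.
Proof. by case: a. Qed.

Lemma omega_mid a r : 0 < r -> r < a -> omega K a r =
  cp (TMerge K r (a - r)) (cp (tn (TDot K r) (I (a - r))) (TSplit K r (a - r))).
Proof.
move=> r0 ra; rewrite /omega.
have -> : (r == 0) = false by lia.
have -> : (a < r) = false by lia.
rewrite /Mg /Sp /dot /idb.
have -> : (r == 0) = false by lia.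
have -> : (a - r == 0) = false by lia.
case: r r0 ra => // r _ ra.
by case E: (a - r.+1) => [|k]; first lia.
Qed.

Lemma omega_top a : 0 < a -> omega K a a = cp (I a) (cp (tn (TDot K a) (TId [::])) (I a)).
Proof.
move=> a0; rewrite /omega.
have -> : (a == 0) = false by lia.
rewrite ltnn subnn /Mg /Sp eqxx orbT addn0 /idb /dot.
by case: a a0.
Qed.

Lemma omega_big a r : a < r -> omega K a r = TZero (blk K a) (blk K a).
Proof.
move=> ar; rewrite /omega ar.
by have -> : (r == 0) = false by lia.
Qed.

Lemma End_I a : 0 < a -> End a (I a).
Proof. by move=> a0; split=> //=; rewrite /valid /= a0. Qed.

Lemma End_omega a r : 0 < a -> End a (omega K a r).
Proof.
move=> a0.
case: (ltngtP r a) => [ra|ar|->].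
- case: r ra => [|r] ra; first by rewrite omega_0 //; exact: End_I.
  rewrite omega_mid //; split; sd3; try lia.
  + by rewrite subnKC // ltnW.
  + by rewrite subnKC // ltnW.
- by rewrite omega_big // blk_pos //; split=> //=; rewrite /valid /= a0.
- rewrite omega_top //; split; sd3; by rewrite /valid /= a0.
Qed.

Lemma End_tsum a (l : seq (tm K)) : 0 < a -> (forall f, List.In f l -> End a f) ->
  End a (tsum [:: Blk K a] [:: Blk K a] l).
Proof.
move=> a0; elim: l => [|g l IH] H /=.
- by split=> //=; rewrite /valid /= a0.
- have [wg sg tg] := H g (or_introl erefl).
  have [wl sl tl] : End a (tsum [:: Blk K a] [:: Blk K a] l).
    by apply: IH => f fl; apply: H; right.
  by split=> //=; split=> //; congruence.
Qed.

Lemma In_map (A B : Type) (F : A -> B) (l : seq A) y : List.In y (map F l) -> exists2 x, List.In x l & y = F x.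
Proof.
elim: l => //= x l IH [<-|/IH [z zl ->]]; first by exists x; [left|].
by exists z; [right|].
Qed.

Lemma End_gpol a (u : K) : 0 < a -> End a (gpol a u).
Proof.
move=> a0; rewrite /gpol blk_pos //; apply: End_tsum => // f fin; have [i _ ->] := In_map fin.
by have [? ? ?] := End_omega (a - i) a0; split.
Qed.
End Om.

Import GRing.Theory.

Section Main.
Variable K : comPzRingType.
Variable u : K.
Notation R := (TId [:: Red u]).
Notation I b := (TId [:: Blk K b]).

Lemma R7DU a : 0 < a -> ASeq (cp (TDown u a) (TUp a u)) (tn (gpol a u) R).
Proof.
move=> a0; have [wg sg tg] := End_gpol u a0.
case: a a0 wg sg tg => // a _; set g := gpol a.+1 u => wg sg tg.
apply: eq_ax; first exact (@ax_R7DU K a.+1 u isT).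
all: clearbody g; rewrite /= ?sg ?tg //.
Qed.

Lemma R7UD a : 0 < a -> ASeq (cp (TUp a u) (TDown u a)) (tn R (gpol a u)).
Proof.
move=> a0; have [wg sg tg] := End_gpol u a0.
case: a a0 wg sg tg => // a _; set g := gpol a.+1 u => wg sg tg.
apply: eq_ax; first exact (@ax_R7UD K a.+1 u isT).
all: clearbody g; rewrite /= ?sg ?tg //.
Qed.

Lemma ComU_gpol a : 0 < a -> Com u (TUp a u) true false (gpol a u).
Proof.
move=> a0; have [wg sg tg] := End_gpol u a0; rewrite /Com /W.
have h1 := R7DU a0; have h2 := R7UD a0.
move: h1 h2 wg sg tg; generalize (gpol a u) => g h1 h2 wg sg tg.
apply: eqT; first by apply: cpR; [apply: eqS; apply: h1 | |]; sd3.
apply: eqT; first by apply: eqS; apply: cpA; sd3.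
by apply: cpL; [apply: h2 | |]; sd3.
Qed.

Lemma ComD_gpol a : 0 < a -> Com u (TDown u a) false true (gpol a u).
Proof.
move=> a0; have [wg sg tg] := End_gpol u a0; rewrite /Com /W.
have h1 := R7DU a0; have h2 := R7UD a0.
move: h1 h2 wg sg tg; generalize (gpol a u) => g h1 h2 wg sg tg.
apply: eqT; first by apply: cpR; [apply: eqS; apply: h2 | |]; sd3.
apply: eqT; first by apply: eqS; apply: cpA; sd3.
by apply: cpL; [apply: h1 | |]; sd3.
Qed.

Section ComX.
Variables (X : tm K) (s t : bool) (b : nat).
Hypotheses (b0 : 0 < b) (wX : wt X) (sX : src X = Wo u s [:: Blk K b]) (tX : tgt X = Wo u t [:: Blk K b]).

Lemma Com_tsum (l : seq (tm K)) : (forall f, List.In f l -> End b f /\ Com u X s t f) ->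
  Com u X s t (tsum [:: Blk K b] [:: Blk K b] l).
Proof.
elim: l => [|g l IH] H /=; first exact: Com_zero.
have [eg cg] := H g (or_introl erefl).
apply: (@Com_add K u X s t b) => //.
- apply: End_tsum => // f fl; exact: (H f (or_intror fl)).1.
- by apply: IH => f fl; apply: H; right.
Qed.

Lemma Com_top : Com u X s t (TDot K b) -> Com u X s t (omega K b b).
Proof.
move=> c; rewrite omega_top //.
have eI := End_I K b0.
have eD : End b (tn (TDot K b) (TId [::])) by split=> //=; rewrite cats0.
apply: (@Com_cp K u X s t b) => //; first by split; sd3.
- apply: (@Com_cp K u X s t b) => //; first exact: Com_id.
  apply: (@Com_cong K u X s t b) _ _ _ _ (eqS (tn1r _)) _ c => //; split=> //.
- exact: Com_id.
Qed.

Lemma top_dot : ASeq (omega K b b) (TDot K b).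
Proof.
rewrite omega_top //.
apply: eqT; first by apply: (@cp1l K (cp (tn (TDot K b) (TId [::])) (I b))); sd3.
apply: eqT; first by apply: cpL; [apply: tn1r | |]; sd3.
by apply: (@cp1r K (TDot K b)).
Qed.
End ComX.

Lemma ComU_omega a r : 0 < a -> r <= a -> (0 < r -> Com u (TUp r u) true false (TDot K r)) ->
  Com u (TUp a u) true false (omega K a r).
Proof.
move=> a0 ra H.
case: (ltngtP r a) ra H => [ra _ H|//|-> _ H].
- case: r ra H => [|r] ra H; first by rewrite omega_0 //; apply: Com_id.
  rewrite omega_mid //.
  have := @L3U K u r.+1 (a - r.+1) (TDot K r.+1) isT ltac:(lia) isT erefl erefl (H isT).
  by rewrite subnKC // ltnW.
- by apply: Com_top => //; apply: H.
Qed.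

Lemma ComD_omega a r : 0 < a -> r <= a -> (0 < r -> Com u (TDown u r) false true (TDot K r)) ->
  Com u (TDown u a) false true (omega K a r).
Proof.
move=> a0 ra H.
case: (ltngtP r a) ra H => [ra _ H|//|-> _ H].
- case: r ra H => [|r] ra H; first by rewrite omega_0 //; apply: Com_id.
  rewrite omega_mid //.
  have := @L3D K u r.+1 (a - r.+1) (TDot K r.+1) isT ltac:(lia) isT erefl erefl (H isT).
  by rewrite subnKC // ltnW.
- by apply: Com_top => //; apply: H.
Qed.
End Main.

Import GRing.Theory.

Lemma In_iota i m n : List.In i (iota m n) -> m <= i < m + n.
Proof.
elim: n m => [|n IH] m //= [<-|/IH]; first lia.
lia.
Qed.

Section Fin.
Variable K : comPzRingType.
Variable u : K.

Definition cf (i : nat) : K := ((-1) ^+ i * \prod_(j < i) (u + j%:R))%R.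

Lemma gpol_split a : 0 < a -> gpol a u = TAdd (TScale (cf 0) (omega K a a))
   (tsum [:: Blk K a] [:: Blk K a] [seq TScale (cf i) (omega K a (a - i)) | i <- iota 1 a]).
Proof. by move=> a0; rewrite /gpol blk_pos //= subn0. Qed.

Lemma cf0 : cf 0 = 1%R.
Proof. by rewrite /cf expr0 big_ord0 mulr1. Qed.

Lemma End_scale a c (f : tm K) : End a f -> End a (TScale c f).
Proof. by case. Qed.

Lemma dot_com n : forall a, 0 < a -> a <= n ->
  Com u (TUp a u) true false (TDot K a) /\ Com u (TDown u a) false true (TDot K a).
Proof.
elim: n => [|n IH] a a0 an; first lia.
have hyp : forall r, r < a -> 0 < r ->
    Com u (TUp r u) true false (TDot K r) /\ Com u (TDown u r) false true (TDot K r).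
  by move=> r ra r0; apply: IH => //; lia.
have eT := End_omega K a a0.
have eR : End a (tsum [:: Blk K a] [:: Blk K a] [seq TScale (cf i) (omega K a (a - i)) | i <- iota 1 a]).
  apply: End_tsum => // f fin; have [i _ ->] := In_map fin.
  exact/End_scale/End_omega.
have vI : valid [:: Blk K a] by rewrite /valid /= a0.
split.
- have cg := ComU_gpol u a0; rewrite gpol_split // in cg.
  have cr : Com u (TUp a u) true false
      (tsum [:: Blk K a] [:: Blk K a] [seq TScale (cf i) (omega K a (a - i)) | i <- iota 1 a]).
    apply: Com_tsum => // f fin; have [i iin ->] := In_map fin.
    have := In_iota iin => ia.
    split; first exact/End_scale/End_omega.
    apply: (@Com_scale K u _ true false a) => //; first exact: End_omega.
    apply: ComU_omega => //; first lia.
    by move=> r0; apply: (hyp _ _ r0).1; lia.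
  have c1 := @Com_cancel K u (TUp a u) true false a a0 erefl erefl _ _ (End_scale _ eT) eR cg cr.
  rewrite cf0 in c1.
  have c2 := @Com_cong K u (TUp a u) true false a a0 erefl erefl _ _ (scale1 (let: And3 w _ _ := eT in w)) (End_scale _ eT) c1.
  exact: (@Com_cong K u (TUp a u) true false a a0 erefl erefl _ _ (top_dot K a0) eT c2).
- have cg := ComD_gpol u a0; rewrite gpol_split // in cg.
  have cr : Com u (TDown u a) false true
      (tsum [:: Blk K a] [:: Blk K a] [seq TScale (cf i) (omega K a (a - i)) | i <- iota 1 a]).
    apply: Com_tsum => // f fin; have [i iin ->] := In_map fin.
    have := In_iota iin => ia.
    split; first exact/End_scale/End_omega.
    apply: (@Com_scale K u _ false true a) => //; first exact: End_omega.
    apply: ComD_omega => //; first lia.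
    by move=> r0; apply: (hyp _ _ r0).2; lia.
  have c1 := @Com_cancel K u (TDown u a) false true a a0 erefl erefl _ _ (End_scale _ eT) eR cg cr.
  rewrite cf0 in c1.
  have c2 := @Com_cong K u (TDown u a) false true a a0 erefl erefl _ _ (scale1 (let: And3 w _ _ := eT in w)) (End_scale _ eT) c1.
  exact: (@Com_cong K u (TDown u a) false true a a0 erefl erefl _ _ (top_dot K a0) eT c2).
Qed.
End Fin.

Theorem lemma3p5 (K : comPzRingType) (a r : nat) (u : K) :
  (0 < a)%N -> (r <= a)%N ->
  ASeq (cp (Up a u) (tn (omega K a r) (idr u)))
       (cp (tn (idr u) (omega K a r)) (Up a u)) /\
  ASeq (cp (Dn u a) (tn (idr u) (omega K a r)))
       (cp (tn (omega K a r) (idr u)) (Dn u a)).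
Proof.
move=> a0 ra.
have hU : Com u (TUp a u) true false (omega K a r) := ComU_omega a0 ra (fun r0 => (@dot_com K u r r r0 (leqnn r)).1).
have hD : Com u (TDown u a) false true (omega K a r) := ComD_omega a0 ra (fun r0 => (@dot_com K u r r r0 (leqnn r)).2).
case: a a0 ra hU hD => // a _ _ hU hD.
Qed.
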